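(* Let $\mathcal{S}$ be a finite set of points of interest, and for each history $X=(s_1,\dots,s_t)$ let $P(\cdot\mid X)$ be a probability distribution on $\mathcal{S}$. For an action (recommendation) $a\in\mathcal{S}$ and parameter $\theta\ge1$ define \[ P(s\mid X,a,\theta)=\begin{cases}P(s\mid X)^{1/\theta}, & s=a,\\ P(s\mid X)/z(\theta), & s\ne a,\end{cases}\qquad z(\theta)=\frac{\sum_{s\neq a}P(s\mid X)}{1-P(s=a\mid X)^{1/\theta}}. \] Then for all $\theta,\theta'\ge1$, all histories $X$ and all $a$, \[ \|P(\cdot\mid X,a,\theta)-P(\cdot\mid X,a,\theta')\|_1\le\frac{2}{e}|\theta-\theta'|. \] *)

(* Defs.v *)
From mathcomp Require Import all_boot all_order all_algebra.
From mathcomp Require Import all_classical all_reals all_analysis.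
Set Implicit Arguments. Unset Strict Implicit. Unset Printing Implicit Defensive.
Import Order.TTheory GRing.Theory Num.Theory.
Local Open Scope ring_scope.

Definition is_distr (R : realType) (S : finType) (p : S -> R) : Prop :=
  (forall s, 0 <= p s) /\ \sum_(s : S) p s = 1.

Definition zfac (R : realType) (S : finType) (p : S -> R) (a : S) (theta : R) : R :=
  (\sum_(s : S | s != a) p s) / (1 - p a `^ theta^-1).

Definition Pmod (R : realType) (S : finType) (p : S -> R) (a : S) (theta : R) (s : S) : R :=
  if s == a then p s `^ theta^-1 else p s / zfac p a theta.

Definition l1dist (R : realType) (S : finType) (f g : S -> R) : R :=
  \sum_(s : S) `|f s - g s|.

(* Main.v *)
Require Import Defs.
From mathcomp Require Import all_boot all_order all_algebra.
From mathcomp Require Import all_classical all_reals all_analysis.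
From mathcomp Require Import ring lra.
Import Order.TTheory GRing.Theory Num.Theory.
Local Open Scope ring_scope.

Local Notation "a `^ x" := (powR a x).
Lemma key (R : realType) (L t t' : R) : 0 <= L -> 1 <= t' -> t' <= t ->
  0 <= expR (- (L / t)) - expR (- (L / t')) <= (t - t') / expR 1.
Proof.
move=> L0 t1 tt.
have t0 : 0 < t by lra.
have t'0 : 0 < t' by lra.
set A := expR (- (L / t)).
set d := L / t' - L / t.
have dE : d = (L / t) * ((t - t') / t') by rewrite /d; field; apply/andP; split; lra.
have d0 : 0 <= d by rewrite dE mulr_ge0 ?divr_ge0 //; lra.
have eE : expR (- (L / t')) = A * expR (- d).
  by rewrite /A -expRD; congr expR; rewrite /d; lra.
have A0 : 0 < A by exact: expR_gt0.
have ed : expR (- d) <= 1 by rewrite -expR0 ler_expR; lra.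
have ed' : 1 - d <= expR (- d) by have := expR_ge1Dx (- d); lra.
rewrite eE; apply/andP; split.
  by rewrite subr_ge0 -{2}(mulr1 A) ler_wpM2l // ltW.
have h1 : A - A * expR (- d) <= A * d.
  by rewrite -{1}(mulr1 A) -mulrBr ler_pM2l //; lra.
apply: (le_trans h1).
set u := L / t.
have u0 : 0 <= u by rewrite divr_ge0 //; lra.
have hu : u * A <= (expR 1)^-1.
  have := expR_ge1Dx (u - 1); rewrite expRD expRN => h.
  have e0 := @expR_gt0 R 1; have eu := @expR_gt0 R u.
  have -> : A = (expR u)^-1 by rewrite /A expRN.
  have h' : u <= expR u / expR 1 by lra.
  have eu' : 0 <= (expR u)^-1 by rewrite invr_ge0 ltW.
  apply: le_trans (ler_wpM2r eu' h') _.
  by rewrite mulrAC divff ?gt_eqF // mul1r.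
rewrite dE mulrA (mulrC A) .
have q0 : 0 <= (t - t') / t' by rewrite divr_ge0; lra.
apply: (le_trans (ler_wpM2r q0 hu)).
rewrite [X in _ <= X]mulrC ler_wpM2l ?invr_ge0 ?expR_ge0 //.
rewrite ler_pdivrMr //; nra.
Qed.

Lemma fbound (R : realType) (q t t' : R) : 0 <= q -> q <= 1 -> 1 <= t -> 1 <= t' ->
  `|q `^ t^-1 - q `^ t'^-1| <= `|t - t'| / expR 1.
Proof.
move=> q0 q1 t1 t'1.
have [->|qn0] := eqVneq q 0.
  rewrite !powR0 ?invr_eq0 ?gt_eqF ?subrr ?normr0 ?divr_ge0 ?expR_ge0 //; lra.
rewrite /powR (negbTE qn0).
have L0 : 0 <= - ln q by rewrite oppr_ge0 ln_le0.
have E : forall x, x^-1 * ln q = - (- ln q / x).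
  by move=> x; rewrite mulNr opprK mulrC.
rewrite !E.
have [tt|tt] := leP t' t.
  have /andP[h1 h2] := @key _ _ _ _ L0 t'1 tt.
  by rewrite ger0_norm // ger0_norm // subr_ge0.
have /andP[h1 h2] := @key _ _ _ _ L0 t1 (ltW tt).
by rewrite distrC ger0_norm // distrC ger0_norm // subr_ge0 ltW.
Qed.

Theorem lemma5 (R : realType) (S : finType) (P : seq S -> S -> R)
  (HP : forall X : seq S, is_distr (P X)) :
  forall (theta theta' : R) (X : seq S) (a : S),
    1 <= theta -> 1 <= theta' ->
    l1dist (Pmod (P X) a theta) (Pmod (P X) a theta')
      <= 2 / expR 1 * `|theta - theta'|.
Proof.
move=> t t' X a t1 t'1.
have [p0 p1] := HP X.
set p := P X in p0 p1 *.
set q := p a.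
have Sq : \sum_(s | s != a) p s = 1 - q.
  by move: p1; rewrite (bigD1 a) //= => <-; rewrite /q addrC addrK.
have q0 : 0 <= q := p0 a.
have q1 : q <= 1.
  by rewrite -subr_ge0 -Sq sumr_ge0.
set f := fun x : R => q `^ x^-1.
set c := fun x : R => (1 - f x) / (1 - q).
have PE : forall x s, s != a -> Pmod p a x s = p s * c x.
  move=> x s sa; rewrite /Pmod (negbTE sa) /zfac Sq /c /f /q.
  by rewrite invf_div.
rewrite /l1dist (bigD1 a) //=.
rewrite /Pmod eqxx -/(Pmod p a t) -/(Pmod p a t') -/q.
have -> : \sum_(i | i != a) `|Pmod p a t i - Pmod p a t' i|
        = (1 - q) * `|c t - c t'|.
  rewrite -Sq mulr_suml; apply: eq_bigr => s sa.
  by rewrite !PE // -mulrBr normrM ger0_norm.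
have h2 : (1 - q) * `|c t - c t'| <= `|f t - f t'|.
  rewrite -(ger0_norm (_ : 0 <= 1 - q)) ?subr_ge0 // -normrM.
  have -> : (1 - q) * (c t - c t') = ((1 - q) / (1 - q)) * (f t' - f t).
    by rewrite /c -mulrBl mulrA mulrAC; congr (_ * _); lra.
  rewrite normrM distrC ler_piMl ?normr_ge0 //.
  have [->|nz] := eqVneq (1 - q) 0; first by rewrite mul0r normr0.
  by rewrite divff // normr1.
have hf := @fbound _ _ _ _ q0 q1 t1 t'1.
rewrite -/(f t) -/(f t') in hf.
have -> : 2 / expR 1 * `|t - t'| = 2 * (`|t - t'| / expR 1).
  by rewrite mulrAC mulrA.
lra.
Qed.
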